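(* Let $T=\bigoplus_p\mathbb Z(p)$ (sum over all primes) and $G=\prod_p\mathbb Z(p)$, so $T$ is the torsion subgroup of $G$. Then $G$ and $T$ are strongly co-Hopfian, but $G/T$ is not strongly co-Hopfian.
   Context: All groups are abelian. A group $G$ is strongly co-Hopfian if for every endomorphism $f$ of $G$ there is $n\in\mathbb N$ with $f^n(G)=f^{n+1}(G)$. $\mathbb Z(p)$ denotes the cyclic group of order $p$. *)

(* Defs.v *)
From HB Require Import structures.
From mathcomp Require Import all_boot all_algebra.
From mathcomp Require Import boolp classical_sets.
From mathcomp Require Import ring_quotient generic_quotient.

Set Implicit Arguments.
Unset Strict Implicit.
Unset Printing Implicit Defensive.

Import GRing.Theory.

Definition strongly_coHopfian (V : zmodType) : Prop :=
  forall f : {additive V -> V},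
    exists n : nat, range (iter n f) = range (iter n.+1 f).

(* The p-th coordinate lives in {0,..,p-1} = Z(p) when p is prime; the
   coordinates at non-primes are forced to be 0 (trivial group Z/1). *)
Definition pmod (n : nat) : nat := if prime n then n else 1.

Lemma pmod_gt0 n : 0 < pmod n.
Proof. by rewrite /pmod; case: ifP => // /prime_gt0. Qed.

Record Gprod := MkG { gval : nat -> nat; gvalP : `[< forall n, gval n < pmod n >] }.

HB.instance Definition _ := [isSub for gval].
HB.instance Definition _ := [Choice of Gprod by <:].

Lemma gval_lt (x : Gprod) n : gval x n < pmod n.
Proof. by move: (gvalP x) => /asboolP. Qed.

Definition gzero : Gprod.
Proof. by refine (@MkG (fun _ => 0) _); apply/asboolP => n; exact: pmod_gt0. Defined.

Definition gadd (x y : Gprod) : Gprod.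
Proof.
refine (@MkG (fun n => (gval x n + gval y n) %% pmod n) _).
by apply/asboolP => n; rewrite ltn_pmod // pmod_gt0.
Defined.

Definition gopp (x : Gprod) : Gprod.
Proof.
refine (@MkG (fun n => (pmod n - gval x n) %% pmod n) _).
by apply/asboolP => n; rewrite ltn_pmod // pmod_gt0.
Defined.

Lemma gaddA : associative gadd.
Proof.
move=> x y z; apply: val_inj; apply: funext => n /=.
by rewrite modnDml modnDmr addnA.
Qed.

Lemma gaddC : commutative gadd.
Proof. by move=> x y; apply: val_inj; apply: funext => n /=; rewrite addnC. Qed.

Lemma gadd0 : left_id gzero gadd.
Proof.
by move=> x; apply: val_inj; apply: funext => n /=; rewrite add0n modn_small // gval_lt.
Qed.

Lemma gaddN : left_inverse gzero gopp gadd.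
Proof.
move=> x; apply: val_inj; apply: funext => n /=.
by rewrite modnDml subnK ?modnn // ltnW // gval_lt.
Qed.

HB.instance Definition _ := GRing.isZmodule.Build Gprod gaddA gaddC gadd0 gaddN.

Definition G : zmodType := Gprod.

Definition Tset : {pred G} :=
  fun x => `[< exists N, forall n, N <= n -> gval x n = 0 >].

Lemma Tset_zmod_closed : GRing.zmod_closed Tset.
Proof.
split.
  by apply/asboolP; exists 0.
move=> x y /asboolP [N1 H1] /asboolP [N2 H2]; apply/asboolP.
exists (maxn N1 N2) => n Hn.
have -> : gval (x - y)%R n = (gval x n + (pmod n - gval y n) %% pmod n) %% pmod n by [].
rewrite H1; last by apply: leq_trans Hn; rewrite leq_maxl.
rewrite H2; last by apply: leq_trans Hn; rewrite leq_maxr.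
by rewrite subn0 modnn add0n mod0n.

Qed.

HB.instance Definition _ := GRing.isZmodClosed.Build G Tset Tset_zmod_closed.

Record Tsum := MkT { tval : G; tvalP : tval \in Tset }.

HB.instance Definition _ := [isSub for tval].
HB.instance Definition _ := [Choice of Tsum by <:].
HB.instance Definition _ := [SubChoice_isSubZmodule of Tsum by <:].

Definition T : zmodType := Tsum.

Import Quotient.
Definition GmodT : zmodType := Quotient.quot Tset.

(* Main.v *)
From HB Require Import structures.
Require Import Defs.
From mathcomp Require Import all_boot all_algebra.
From mathcomp Require Import boolp classical_sets.
From mathcomp Require Import ring_quotient generic_quotient.
Import GRing.Theory Num.Theory.
Local Open Scope ring_scope.
Local Open Scope quotient_scope.

Lemma maxcompl (V : zmodType) (E : set V) :
  exists A : set V,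
    ((forall x y, A x -> A y -> A (x - y)) /\ (forall x, A x -> E x -> x = 0)) /\
    forall B : set V, (A `<` B)%classic ->
      ~ ((forall x y, B x -> B y -> B (x - y)) /\ (forall x, B x -> E x -> x = 0)).
Proof.
apply: (Zorn_bigcup (P := [set C : set V | (forall x y, C x -> C y -> C (x - y)) /\
   (forall x, C x -> E x -> x = 0)])).
move=> F FP tot; split.
  move=> x y [X FX Xx] [Y FY Yy].
  have [XY|YX] := tot X Y FX FY.
    by exists Y => //; apply: (FP Y FY).1 => //; exact: XY.
  by exists X => //; apply: (FP X FX).1 => //; exact: YX.
by move=> x [X FX Xx]; apply: (FP X FX).2.
Qed.

Lemma abstract_not (V : zmodType) (psi : {additive {poly int} -> V}) :
  (forall P, psi P = 0 -> P = 0) ->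
  (forall (v : V) k, (0 < k)%N -> exists w, w *+ k = v) ->
  (forall (v : V) k, (0 < k)%N -> v *+ k = 0 -> v = 0) ->
  ~ strongly_coHopfian V.
Proof.
move=> inj dv tf.
pose E : set V := (fun x => exists P, psi P = x).
have [A [[Asub AE] Amax]] := @maxcompl V E.
pose Cp : V -> Prop := fun c => c = 0 \/ A c.
have Cp0 : Cp 0 by left.
have A0 : forall y, A y -> A 0 by move=> y Ay; rewrite -(subrr y); exact: Asub.
have CpB : forall x y, Cp x -> Cp y -> Cp (x - y).
  move=> x y [->|Ax] [->|Ay].
  - by left; rewrite subrr.
  - by right; apply: Asub => //; exact: A0 Ay.
  - by right; rewrite subr0.
  - by right; exact: Asub.
have CpN : forall x, Cp x -> Cp (- x) by move=> x Cx; rewrite -sub0r; exact: CpB.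
have CpD : forall x y, Cp x -> Cp y -> Cp (x + y).
  by move=> x y Cx Cy; rewrite -(opprK y); apply: CpB => //; exact: CpN.
have CpMn : forall x n, Cp x -> Cp (x *+ n).
  by move=> x n Cx; elim: n => [|n IH]; [rewrite mulr0n|rewrite mulrS; exact: CpD].
have CpE : forall x, Cp x -> E x -> x = 0 by move=> x [->|Ax] // Ex; exact: AE.
have rep : forall v, exists k c P, [/\ (0 < k)%N, Cp c & v *+ k = c + psi P].
  move=> v.
  pose B : set V := (fun w => exists c (m : int), Cp c /\ w = c + v *~ m).
  have AB : (A `<=` B)%classic.
    by move=> a Aa; exists a, 0; split; [right|rewrite mulr0z addr0].
  have BB : forall x y, B x -> B y -> B (x - y).
    move=> _ _ [c [m [Cc ->]]] [c' [m' [Cc' ->]]]; exists (c - c'), (m - m').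
    by split; [exact: CpB | rewrite mulrzBr opprD addrACA].
  have [PB|nPB] := EM (forall x, B x -> E x -> x = 0).
    have Bv : B v by exists 0, 1; split; [left | rewrite add0r mulr1z].
    case: (EM (A v)) => [Av|nAv].
      by exists 1%N, v, 0; split; [|right|rewrite raddf0 addr0 mulr1n].
    exfalso; apply: (Amax B) (conj BB PB); split=> // BA; exact: nAv (BA v Bv).
  move/existsNP: nPB => [x]; move/not_implyP => [[c [m [Cc ->]]]].
  move/not_implyP => [[P HP]] nz.
  case: m HP nz => n HP nz.
    case: n HP nz => [|n] HP nz.
      by exfalso; apply: nz; rewrite mulr0z addr0 in HP *; apply: CpE Cc _; exists P.
    exists n.+1, (-c), P; split=> //; first exact: CpN.
    by rewrite HP pmulrn addKr.
  exists n.+1, c, (-P); split=> //.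
  by rewrite raddfN HP NegzE mulrNz -pmulrn opprB addrC subrK.
pose R v w := exists k c P,
  [/\ (0 < k)%N, Cp c, v *+ k = c + psi P & w *+ k = psi (P * 'X)].
have Rex : forall v, exists w, R v w.
  move=> v; have [k [c [P [k0 Cc Hv]]]] := rep v.
  by have [w Hw] := dv (psi (P * 'X)) k k0; exists w, k, c, P.
have Runi : forall v w w', R v w -> R v w' -> w = w'.
  move=> v w w' [k [c [P [k0 Cc Hv Hw]]]] [k' [c' [P' [k0' Cc' Hv' Hw']]]].
  have H1 : c *+ k' - c' *+ k = psi (P' *+ k - P *+ k').
    have : (c + psi P) *+ k' = (c' + psi P') *+ k.
      by rewrite -Hv -Hv' -!mulrnA mulnC.
    rewrite !mulrnDl => H; rewrite raddfB (raddfMn psi) (raddfMn psi).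
    by apply/eqP; rewrite subr_eq addrAC eq_sym subr_eq addrC H.
  have H2 : P *+ k' = P' *+ k.
    apply/eqP; rewrite eq_sym -subr_eq0; apply/eqP/inj; rewrite -H1.
    by apply: CpE; [apply: CpB; exact: CpMn | rewrite H1; eexists].
  apply/eqP; rewrite -subr_eq0; apply/eqP; apply: (tf _ (k * k')%N).
    by rewrite muln_gt0 k0.
  rewrite mulrnBl mulrnA Hw [in X in _ - X]mulnC mulrnA Hw' -!raddfMn.
  by rewrite -!mulrnAl H2 subrr.
have [f fR] := choice Rex.
have fB : zmod_morphism f.
  move=> x y; apply: (Runi (x - y)); first exact: fR.
  have [k [c [P [k0 Cc Hv Hw]]]] := fR x.
  have [k' [c' [P' [k0' Cc' Hv' Hw']]]] := fR y.
  exists (k * k')%N, (c *+ k' - c' *+ k), (P *+ k' - P' *+ k); split.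
  - by rewrite muln_gt0 k0.
  - by apply: CpB; exact: CpMn.
  - rewrite mulrnBl mulrnA Hv [in X in _ - X]mulnC mulrnA Hv'.
    by rewrite !mulrnDl raddfB (raddfMn psi) (raddfMn psi) opprD addrACA.
  - rewrite mulrnBl mulrnA Hw [in X in _ - X]mulnC mulrnA Hw'.
    by rewrite mulrBl raddfB !mulrnAl (raddfMn psi) (raddfMn psi).
pose fa : {additive V -> V} := HB.pack f (GRing.isZmodMorphism.Build V V f fB).
have fpsi : forall P, f (psi P) = psi (P * 'X).
  move=> P; apply: (Runi (psi P)); first exact: fR.
  by exists 1%N, 0, P; split; rewrite ?mulr1n ?add0r.
move/(_ fa) => [n Hn].
have iterX : forall m, iter m fa (psi 1) = psi ('X^m).
  elim=> [|m IH]; first by rewrite expr0.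
  by rewrite iterS IH /= fpsi -exprSr.
have shape : forall m v, exists (k : nat) (P : {poly int}), (0 < k)%N /\ iter m.+1 fa v *+ k = psi (P * 'X^(m.+1)).
  elim=> [|m IH] v.
    by have [k [c [P [k0 _ _ Hw]]]] := fR v; exists k, P; rewrite expr1.
  have [k [P [k0 Hk]]] := IH v.
  set w := iter m.+1 fa v in Hk *.
  have [w'' Hw''] := dv (psi (P * 'X^(m.+2))) k k0.
  have Rw : R w w''.
    exists k, 0, (P * 'X^(m.+1)); split => //; first by rewrite add0r.
    by rewrite -mulrA -exprSr.
  exists k, P; split=> //; rewrite iterS -/w.
  by change (f w *+ k = psi (P * 'X^(m.+2))); rewrite (Runi _ _ _ (fR w) Rw).
have : (range (iter n.+1 fa)) (psi 'X^n).
  by rewrite -Hn; exists (psi 1) => //; exact: iterX.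
case=> v _ Hv.
have [k [P [k0 Hk]]] := shape n v.
rewrite Hv in Hk.
have : 'X^n *+ k - P * 'X^(n.+1) = 0 :> {poly int}.
  by apply: inj; rewrite raddfB raddfMn Hk subrr.
move=> /(congr1 (fun p : {poly int} => p`_n)) /=.
rewrite coefB coefMn coefXn eqxx coefMXn ltnSn coef0 subr0 => /eqP.
by rewrite mulr1n Num.Theory.pnatr_eq0 => /eqP k0'; rewrite k0' in k0.
Qed.

Lemma gvalD (x y : G) n : gval (x + y) n = ((gval x n + gval y n) %% pmod n)%N.
Proof. by []. Qed.
Lemma gvalN (x : G) n : gval (- x) n = ((pmod n - gval x n) %% pmod n)%N.
Proof. by []. Qed.
Lemma gval0 n : gval (0 : G) n = 0%N.
Proof. by []. Qed.
Lemma gvalB (x y : G) n :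
  gval (x - y) n = ((gval x n + (pmod n - gval y n)) %% pmod n)%N.
Proof. by rewrite gvalD gvalN modnDmr. Qed.
Lemma gvalMn (x : G) k n : gval (x *+ k) n = ((k * gval x n) %% pmod n)%N.
Proof.
elim: k => [|k IH]; first by rewrite mulr0n mul0n mod0n.
by rewrite mulrS gvalD IH modnDmr mulSn.
Qed.
Lemma G_eq (x y : G) : (forall n, gval x n = gval y n) -> x = y.
Proof. by move=> H; apply: val_inj; apply: funext => n; exact: H. Qed.
Lemma gval_small (x : G) n : (gval x n %% pmod n = gval x n)%N.
Proof. by rewrite modn_small // gval_lt. Qed.
Lemma gval_np (x : G) n : ~~ prime n -> gval x n = 0%N.
Proof. by move=> np; have := gval_lt x n; rewrite /pmod (negbTE np); case: (gval x n). Qed.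
Lemma pmod_p p : prime p -> pmod p = p.
Proof. by rewrite /pmod => ->. Qed.

Definition mkG (h : nat -> nat) (H : forall n, (h n < pmod n)%N) : G :=
  @MkG h (asboolT H).
Lemma gval_mkG h H n : gval (@mkG h H) n = h n.
Proof. by []. Qed.

Lemma mkG_ex (R : nat -> nat -> Prop) :
  (forall n, exists u, (u < pmod n)%N /\ R n u) ->
  exists x : G, forall n, R n (gval x n).
Proof.
move=> H; have [h hP] := choice H.
have hlt : forall n, (h n < pmod n)%N by move=> n; case: (hP n).
by exists (@mkG h hlt) => n; rewrite gval_mkG; case: (hP n).
Qed.

Lemma modinv a q : prime q -> ~~ (q %| a)%N -> exists u, ((a * u) %% q = 1)%N.
Proof.
move=> pq nd.
have cop : coprime a q by rewrite coprime_sym prime_coprime.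
have a0 : (0 < a)%N by case: (posnP a) nd => [->|]; rewrite ?dvdn0.
case: (egcdnP q a0) => km kn e _.
exists km; rewrite mulnC e (eqP cop) modnMDl modn_small //; exact: prime_gt1.
Qed.

Lemma divcoord a y n : prime n -> ~~ (n %| a)%N -> (y < n)%N ->
  exists u, [/\ (u < n)%N, ((a * u) %% n = y)%N & (y = 0%N -> u = 0%N)].
Proof.
move=> pn nd yl; have [i hi] := @modinv a n pn nd.
exists ((i * y) %% n)%N; split.
- by rewrite ltn_mod prime_gt0.
- by rewrite modnMmr mulnA -modnMml hi mul1n modn_small.
- by move=> ->; rewrite muln0 mod0n.
Qed.

Lemma divG (c : nat) (x : G) :
  (forall q, prime q -> (q %| c)%N -> gval x q = 0%N) ->
  exists z : G, z *+ c = x /\ (forall q, gval x q = 0%N -> gval z q = 0%N).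
Proof.
move=> H.
pose R q u := ((c * u) %% pmod q)%N = gval x q /\ (gval x q = 0%N -> u = 0%N).
have Hex : forall q, exists u, (u < pmod q)%N /\ R q u.
  move=> q; rewrite /R; case: (eqVneq (gval x q) 0%N) => [x0|xn0].
    by exists 0%N; rewrite pmod_gt0 muln0 mod0n x0.
  have pq : prime q by apply: contraNT xn0 => /gval_np ->.
  have nd : ~~ (q %| c)%N by apply: contra xn0 => /(H q pq) ->.
  have yl : (gval x q < q)%N by have := gval_lt x q; rewrite pmod_p.
  have [u [ul hu h0]] := @divcoord c (gval x q) q pq nd yl.
  by exists u; rewrite pmod_p // ul hu.
have [z hz] := @mkG_ex R Hex.
exists z; split; last by move=> q /(proj2 (hz q)).
by apply: G_eq => q; rewrite gvalMn (proj1 (hz q)).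
Qed.

Lemma surjG (c : nat -> nat) (x : G) :
  exists z : G, (forall q, gval x q = 0%N -> gval z q = 0%N) /\
   forall p, ((c p * ((c p * gval z p) %% pmod p)) %% pmod p = (c p * gval x p) %% pmod p)%N.
Proof.
pose R p u :=
   ((c p * ((c p * u) %% pmod p)) %% pmod p = (c p * gval x p) %% pmod p)%N /\
   (gval x p = 0%N -> u = 0%N).
have Hex : forall p, exists u, (u < pmod p)%N /\ R p u.
  move=> p; rewrite /R; case: (boolP (prime p && ~~ (p %| c p)%N)) => [/andP [pp nd]|].
    have yl : (gval x p < p)%N by have := gval_lt x p; rewrite pmod_p.
    have [u [ul hu h0]] := @divcoord (c p) (gval x p) p pp nd yl.
    by exists u; rewrite pmod_p // ul hu.
  move=> hn; exists 0%N; rewrite pmod_gt0 muln0 mod0n muln0 mod0n; split=> //; split=> //.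
  case: (boolP (prime p)) hn => [pp /= /negbNE hd|np _].
    by apply/esym/eqP; rewrite pmod_p // -/(dvdn _ _) dvdn_mulr.
  by rewrite /pmod (negbTE np) modn1.
have [z hz] := @mkG_ex R Hex.
by exists z; split => [q /(proj2 (hz q))|p]; [|exact: (proj1 (hz p))].
Qed.

Lemma ep_lt p n : ((if n == p then 1 %% pmod n else 0) < pmod n)%N.
Proof. by case: ifP; rewrite ?ltn_pmod ?pmod_gt0. Qed.
Definition ep (p : nat) : G := @mkG _ (ep_lt p).
Lemma gval_ep p n : gval (ep p) n = (if n == p then 1 %% pmod n else 0)%N.
Proof. by []. Qed.

Lemma CW_core (S : G -> Prop) (F : G -> G) (x : G) p :
  S x -> S (ep p) -> (forall u v, S u -> S v -> S (u - v)) ->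
  (forall u z, S u -> (forall q, gval u q = 0%N -> gval z q = 0%N) -> S z) ->
  (forall u v, S u -> S v -> F (u - v) = F u - F v) ->
  gval (F x) p = ((gval (F (ep p)) p * gval x p) %% pmod p)%N.
Proof.
move=> Sx Se SB Ss FB.
have S0 : S 0 by rewrite -(subrr x); exact: SB.
have F0 : F 0 = 0.
  by have h := FB 0 0 S0 S0; rewrite subrr in h; rewrite {1}h subrr.
have SN : forall u, S u -> S (- u) by move=> u Su; rewrite -sub0r; exact: SB.
have FN : forall u, S u -> F (- u) = - F u.
  by move=> u Su; rewrite -sub0r FB // F0 sub0r.
have SD : forall u v, S u -> S v -> S (u + v).
  by move=> u v Su Sv; rewrite -(opprK v); apply: SB => //; exact: SN.
have FD : forall u v, S u -> S v -> F (u + v) = F u + F v.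
  by move=> u v Su Sv; rewrite -(opprK v) FB ?FN ?opprK //; exact: SN.
have SMn : forall u n, S u -> S (u *+ n).
  by move=> u n Su; elim: n => [|n IH]; rewrite ?mulr0n // mulrS; exact: SD.
have FMn : forall u n, S u -> F (u *+ n) = F u *+ n.
  move=> u n Su; elim: n => [|n IH]; first by rewrite !mulr0n.
  by rewrite !mulrS FD ?IH //; exact: SMn.
case: (boolP (prime p)) => [pp|np]; last first.
  by rewrite gval_np // /pmod (negbTE np) modn1.
set a := gval x p.
have al : (a < p)%N by have := gval_lt x p; rewrite pmod_p.
pose w := ep p *+ a.
have Sw : S w by exact: SMn.
pose y := x - w.
have Sy : S y by exact: SB.
have wa : gval w p = a by rewrite gvalMn gval_ep eqxx pmod_p // (modn_small (prime_gt1 pp)) muln1 modn_small.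
have y0 : gval y p = 0%N by rewrite gvalB wa pmod_p // subnKC ?modnn // ltnW.
have hyp : forall q, prime q -> (q %| p)%N -> gval y q = 0%N.
  by move=> q pq; rewrite dvdn_prime2 // => /eqP ->.
have [z [hz sz]] := @divG p y hyp.
have Sz : S z by apply: (Ss y).
have -> : x = y + w by rewrite subrK.
rewrite FD // gvalD -hz FMn // FMn // !gvalMn pmod_p // modnMr add0n modn_mod mulnC.
by [].
Qed.

Lemma schG : strongly_coHopfian G.
Proof.
move=> f; exists 1%N.
have cw : forall x p, gval (f x) p = ((gval (f (ep p)) p * gval x p) %% pmod p)%N.
  move=> x p; apply: (@CW_core (fun _ => True)) => // u v _ _; exact: raddfB.
apply/seteqP; split => _ [x _ <-] /=.
  have [z [_ hz]] := surjG (fun p => gval (f (ep p)) p) x.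
  by exists z => //; apply: G_eq => p /=; rewrite (cw (f z)) (cw z) (cw x); exact: hz.
by exists (f x).
Qed.


Lemma Tset_supp (u z : G) : u \in Tset ->
  (forall q, gval u q = 0%N -> gval z q = 0%N) -> z \in Tset.
Proof.
move=> /asboolP [N HN] hs; apply/asboolP; exists N => n Hn; apply: hs; exact: HN.
Qed.

Lemma ep_T p : ep p \in Tset.
Proof.
apply/asboolP; exists p.+1 => n Hn; rewrite gval_ep.
by case: eqP => // e; rewrite e ltnn in Hn.
Qed.

Lemma valT_B (a b : T) : val (a - b) = val a - val b.
Proof. by []. Qed.

Lemma insubdB (u v : G) : u \in Tset -> v \in Tset ->
  insubd (0 : T) (u - v) = insubd 0 u - insubd 0 v.
Proof.
move=> hu hv; apply: val_inj.
rewrite insubdK; last by rewrite rpredB.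
by rewrite valT_B !insubdK.
Qed.

Lemma schT : strongly_coHopfian T.
Proof.
move=> f; exists 1%N.
pose F (g : G) : G := val (f (insubd 0 g)).
have cw : forall (x : T) p, gval (val (f x)) p =
    ((gval (F (ep p)) p * gval (val x) p) %% pmod p)%N.
  move=> x p.
  have -> : val (f x) = F (val x) by rewrite /F valKd.
  apply: (@CW_core (fun g => g \in Tset)).
  - exact: valP.
  - exact: ep_T.
  - by move=> u v hu hv; rewrite rpredB.
  - by move=> u z hu hs; exact: Tset_supp hs.
  - by move=> u v hu hv; rewrite /F insubdB // raddfB.
apply/seteqP; split => _ [x _ <-] /=.
  have [z [sz hz]] := surjG (fun p => gval (F (ep p)) p) (val x).
  have zT : z \in Tset by apply: Tset_supp sz; exact: valP.
  exists (insubd 0 z) => //; apply: val_inj; apply: G_eq => p.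
  rewrite (cw (f _)) (cw (insubd 0 z)) (cw x) insubdK //; exact: hz.
by exists (f x).
Qed.

Lemma torsion (x : G) : x \in Tset <-> exists2 n : nat, (0 < n)%N & (x *+ n = 0).
Proof.
split.
  move=> /asboolP [N HN]; exists N`!; first exact: fact_gt0.
  apply: G_eq => k; rewrite gvalMn gval0.
  case: (leqP N k) => [Nk|kN]; first by rewrite HN // muln0 mod0n.
  case: (boolP (prime k)) => [pk|npk]; last by rewrite /pmod (negbTE npk) modn1.
  rewrite pmod_p //; apply/eqP; change (k %| N`! * gval x k)%N.
  by apply: dvdn_mulr; apply: dvdn_fact; rewrite prime_gt0 // ltnW.
move=> [n n0 hx]; apply/asboolP; exists n.+1 => k hk.
have := congr1 (fun g => gval g k) hx; rewrite gvalMn gval0 => h.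
case: (boolP (prime k)) => [pk|npk]; last exact: gval_np.
rewrite pmod_p // in h.
have : (k %| n * gval x k)%N by rewrite /dvdn h.
rewrite Euclid_dvdM // gtnNdvd //= => hd.
have xl : (gval x k < k)%N by have := gval_lt x k; rewrite pmod_p.
by move: hd; rewrite /dvdn modn_small // => /eqP.
Qed.

Lemma pi0 (x : G) : (\pi_GmodT x = 0) <-> x \in Tset.
Proof.
have -> : (0 : GmodT) = \pi_GmodT 0 by rewrite raddf0.
rewrite -(subr0 x) Quotient.idealrBE subr0.
split; [by move=> ->|by move/eqP].
Qed.

Lemma pisurj (v : GmodT) : exists x : G, \pi_GmodT x = v.
Proof. by exists (repr v); rewrite reprK. Qed.

Lemma tfQ (v : GmodT) k : (0 < k)%N -> v *+ k = 0 -> v = 0.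
Proof.
move=> k0; have [x <-] := pisurj v; rewrite -raddfMn => /pi0 /torsion [m m0 hm].
apply/pi0/torsion; exists (k * m)%N; first by rewrite muln_gt0 k0.
by rewrite mulrnA.
Qed.

Lemma r_lt (x : G) k n : ((if (n %| k)%N then gval x n else 0) < pmod n)%N.
Proof. by case: ifP; rewrite ?gval_lt ?pmod_gt0. Qed.

Lemma dvQ (v : GmodT) k : (0 < k)%N -> exists w, w *+ k = v.
Proof.
move=> k0; have [x <-] := pisurj v.
pose r := @mkG _ (r_lt x k).
have rT : r \in Tset.
  apply/asboolP; exists k.+1 => n hn; rewrite gval_mkG.
  by rewrite gtnNdvd // (leq_trans _ hn).
have hyp : forall q, prime q -> (q %| k)%N -> gval (x - r) q = 0%N.
  move=> q pq qk; rewrite gvalB gval_mkG qk pmod_p // subnKC ?modnn //.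
  by have := gval_lt x q; rewrite pmod_p // => /ltnW.
have [z [hz _]] := @divG k (x - r) hyp.
exists (\pi_GmodT z); rewrite -raddfMn hz raddfB.
by rewrite [X in _ - X](proj2 (pi0 r) rT) subr0.
Qed.

Lemma absmod (A : int) (m : nat) : (0 < m)%N -> ((`|(A %% m)%Z|%N)%:Z = (A %% m)%Z).
Proof. by move=> m0; rewrite abszE ger0_norm // modz_ge0 // eqz_nat -lt0n. Qed.

Lemma absmod_lt (A : int) (m : nat) : (0 < m)%N -> (`|(A %% m)%Z|%N < m)%N.
Proof. by move=> m0; rewrite -ltz_nat absmod // ltz_pmod // ltz_nat. Qed.

Lemma modsub (A B : int) (m : nat) : (0 < m)%N ->
  `|((A - B) %% m)%Z|%N =
    ((`|(A %% m)%Z|%N + (m - `|(B %% m)%Z|%N)) %% m)%N.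
Proof.
move=> m0; apply/eqP; rewrite -eqz_nat; apply/eqP.
rewrite absmod // -modz_nat PoszD -subzn; last exact/ltnW/absmod_lt.
rewrite !absmod // addrCA modzDl.
by rewrite [RHS]modzDml -[RHS]modzDmr modzNm modzDmr.
Qed.

Lemma abszD_le (a b : int) : (`|(a + b)%R| <= `|a| + `|b|)%N.
Proof. by rewrite -lez_nat PoszD !abszE; exact: ler_normD. Qed.

Lemma absz_sum (I : Type) (r : seq I) (Pr : pred I) (F : I -> int) :
  (`|(\sum_(i <- r | Pr i) F i)%R| <= \sum_(i <- r | Pr i) `|F i|)%N.
Proof.
elim: r => [|a r IH]; first by rewrite !big_nil.
rewrite !big_cons; case: (Pr a) => //.
apply: leq_trans (abszD_le _ _) _; by rewrite leq_add2l.
Qed.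

Definition tp (p : nat) : nat := (\max_(t < p.+1 | (t ^ t <= p)%N) t)%N.

Lemma tp_pow p : (0 < p)%N -> (tp p ^ tp p <= p)%N.
Proof.
move=> p0; rewrite /tp; elim/big_ind: _ => //.
by move=> a b ha hb; rewrite /maxn; case: ltnP.
Qed.

Lemma tp_ge N p : (N ^ N <= p)%N -> (N <= tp p)%N.
Proof.
move=> h.
have Np : (N < p.+1)%N.
  rewrite ltnS; apply: leq_trans h; case: N => // N.
  by rewrite -{1}(expn1 N.+1) leq_pexp2l.
exact: (@leq_bigmax_cond _ (fun t : 'I_p.+1 => (t ^ t <= p)%N) (fun t => nat_of_ord t) (Ordinal Np)).
Qed.

Definition hc (P : {poly int}) (n : nat) : nat := `|((P.[(tp n)%:Z]) %% (pmod n)%:Z)%Z|%N.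
Lemma hc_lt P n : (hc P n < pmod n)%N.
Proof. exact: absmod_lt (pmod_gt0 n). Qed.
Definition psiG (P : {poly int}) : G := @mkG _ (hc_lt P).

Lemma psiG_B : zmod_morphism psiG.
Proof.
move=> P Q; apply: G_eq => n; rewrite gvalB !gval_mkG /hc hornerD hornerN.
exact: modsub (pmod_gt0 n).
Qed.

Definition psif (P : {poly int}) : GmodT := \pi_GmodT (psiG P).
Lemma psif_B : zmod_morphism psif.
Proof. by move=> P Q; rewrite /psif psiG_B raddfB. Qed.

Lemma psif_inj P : psif P = 0 -> P = 0.
Proof.
move/pi0 => /asboolP [N0 HN].
apply/eqP; apply: contraT => Pn0.
set s := size P.
pose B := (\max_(i < s) `|(P`_i)%R|)%N.
have s0 : (0 < s)%N by rewrite size_poly_gt0.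
have root_ge : forall K, exists t, (K <= t)%N /\ root P t%:Z.
  move=> K.
  pose K' := maxn K (maxn s (s * B).+1).
  have [p hp pp] := prime_above (maxn N0 (K' ^ K')).
  set t := tp p.
  have Kt : (K' <= t)%N.
    by apply: tp_ge; apply: ltnW; apply: leq_ltn_trans hp; rewrite leq_maxr.
  have K1 : (maxn s (s * B).+1 <= t)%N by apply: leq_trans Kt; rewrite leq_maxr.
  have sBt : (s * B < t)%N by apply: leq_trans K1; rewrite leq_maxr.
  have st : (s <= t)%N by apply: leq_trans K1; rewrite leq_maxl.
  have t0 : (0 < t)%N by apply: leq_ltn_trans sBt.
  exists t; split; first by apply: leq_trans Kt; rewrite leq_maxl.
  have hc0 : hc P p = 0%N.
    by apply: HN; apply: ltnW; apply: leq_ltn_trans hp; rewrite leq_maxl.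
  have bnd : (`|P.[t%:Z]| < p)%N.
    rewrite horner_coef.
    have h1 := @absz_sum _ (index_enum 'I_(size P)) xpredT (fun i : 'I_(size P) => P`_i * t%:Z ^+ i).
    apply: leq_ltn_trans h1 _.
    apply: (@leq_ltn_trans (\sum_(i < s) (B * t ^ s.-1))%N).
      apply: leq_sum => i _; rewrite abszM abszX absz_nat.
      apply: leq_mul; first exact: (leq_bigmax i).
      by apply: leq_pexp2l => //; rewrite -ltnS prednK.
    rewrite sum_nat_const card_ord.
    apply: (@leq_trans (t ^ s)).
      have -> : (t ^ s = t * t ^ s.-1)%N by rewrite -expnS prednK.
      by rewrite mulnA ltn_pmul2r // expn_gt0 t0.
    have tpp : (t ^ t <= p)%N by exact: tp_pow (prime_gt0 pp).
    by apply: leq_trans tpp; rewrite leq_pexp2l.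
  have dv : (p %| `|P.[t%:Z]|)%N.
    have : (p%:Z %| P.[t%:Z])%Z.
      apply/dvdz_mod0P; apply/eqP; rewrite -absz_eq0; apply/eqP.
      by move: hc0; rewrite /hc pmod_p.
    by rewrite dvdzE.
  rewrite /root; apply/eqP/eqP; rewrite -absz_eq0; apply/eqP.
  case: (posnP `|P.[t%:Z]|) => // a0.
  by have := dvdn_leq a0 dv; rewrite leqNgt bnd.
have rs_ex : forall n, exists rs : seq int, [/\ size rs = n, uniq rs & all (root P) rs].
  elim=> [|n [rs [sz u a]]]; first by exists [::].
  have [t [Kt rt]] := root_ge (\max_(r <- rs) `|r|).+1.
  exists (t%:Z :: rs); split => /=; [by rewrite sz| |by rewrite rt a].
  rewrite u andbT; apply/negP => tin.
  have := @leq_bigmax_seq _ rs xpredT (fun r : int => `|r|%N) t%:Z tin isT.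
  by rewrite absz_nat leqNgt Kt.
have [rs [sz u a]] := rs_ex s.
by have := max_poly_roots Pn0 a u; rewrite sz ltnn.
Qed.

Local Close Scope quotient_scope.
Local Close Scope ring_scope.

Theorem mainTheorem14 :
  (* T is the torsion subgroup of G *)
  (forall x : G, x \in Tset <-> exists2 n : nat, (0 < n)%N & (x *+ n = 0)%R) /\
  strongly_coHopfian G /\ strongly_coHopfian T /\ ~ strongly_coHopfian GmodT.
Proof.
split; first exact: torsion.
split; first exact: schG.
split; first exact: schT.
pose psi : {additive {poly int} -> GmodT} :=
  HB.pack psif (GRing.isZmodMorphism.Build _ _ psif psif_B).
apply: (@abstract_not GmodT psi).
- exact: psif_inj.
- by move=> v k k0; exact: dvQ.
- by move=> v k k0; exact: tfQ.
Qed.
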